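(* Let $(X,\ast,u,d)$ be a finite block GL-rack, let $\Delta=\alpha_1\cdots\alpha_n$ be the disjoint cycle decomposition of its diagonal map (fixed points counted as $1$-cycles), and let $A_i=\operatorname{supp}(\alpha_i)$, so $X=\bigsqcup_{i=1}^n A_i$. Let $\widetilde X=\{a_1,\dots,a_n\}$ and $\pi\colon X\to\widetilde X$ the map with $\pi(A_i)=\{a_i\}$. Define on $\widetilde X$ $$a_i\,\tilde\ast\,a_j=\pi(A_i\ast A_j),\qquad \tilde u(a_i)=\pi(u(A_i)),\qquad \tilde d(a_i)=\pi(d(A_i)),$$ where $A_i\ast A_j=\{x\ast y:x\in A_i,y\in A_j\}$. Then these operations are well defined (each of $A_i\ast A_j$, $u(A_i)$, $d(A_i)$ is a single block $A_k$), and $(\widetilde X,\tilde\ast,\tilde u,\tilde d)$ is a GL-quandle.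
   Context: A rack is a set $X$ with a binary operation $\ast$ such that for every $y\in X$ the map $x\mapsto x\ast y$ is a bijection of $X$ and $(x\ast y)\ast z=(x\ast z)\ast(y\ast z)$ for all $x,y,z$. A GL-rack is a quadruple $(X,\ast,u,d)$ where $(X,\ast)$ is a rack and $u,d\colon X\to X$ are maps such that for all $x,y\in X$: $u(d(x\ast x))=d(u(x\ast x))=x$; $u(x\ast y)=u(x)\ast y$ and $d(x\ast y)=d(x)\ast y$; $x\ast u(y)=x\ast d(y)=x\ast y$. A GL-quandle is a GL-rack with $x\ast x=x$ for all $x$. The diagonal map is $\Delta(x)=x\ast x$; for a finite GL-rack it is a bijection and $\Delta=(u\circ d)^{-1}$. A finite GL-rack is a block GL-rack if all cycles in the disjoint cycle decomposition of $\Delta$ (including cycles of length $1$) have the same length. *)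

(* Defs.v *)
From mathcomp Require Import all_boot.
Set Implicit Arguments. Unset Strict Implicit. Unset Printing Implicit Defensive.

Definition is_rack (T : Type) (op : T -> T -> T) : Prop :=
  (forall y, bijective (fun x => op x y)) /\
  (forall x y z, op (op x y) z = op (op x z) (op y z)).

Definition is_GLrack (T : Type) (op : T -> T -> T) (u d : T -> T) : Prop :=
  [/\ is_rack op,
      (forall x, u (d (op x x)) = x /\ d (u (op x x)) = x),
      (forall x y, u (op x y) = op (u x) y /\ d (op x y) = op (d x) y)
    & (forall x y, op x (u y) = op x y /\ op x (d y) = op x y)].

Definition is_GLquandle (T : Type) (op : T -> T -> T) (u d : T -> T) : Prop :=
  is_GLrack op u d /\ (forall x, op x x = x).

Definition diag (T : Type) (op : T -> T -> T) : T -> T := fun x => op x x.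

Definition is_block_GLrack (X : finType) (op : X -> X -> X) (u d : X -> X) : Prop :=
  is_GLrack op u d /\ (forall x y, order (diag op) x = order (diag op) y).

Definition cycle_block (X : finType) (op : X -> X -> X) (x : X) : {set X} :=
  [set y | fconnect (diag op) x y].

Definition cycle_blocks (X : finType) (op : X -> X -> X) : {set {set X}} :=
  [set cycle_block op x | x : X].

Definition set_op (X : finType) (op : X -> X -> X) (A B : {set X}) : {set X} :=
  [set op a b | a in A, b in B].

(* The quotient carrier tilde X: the blocks themselves (a_i identified with A_i). *)
Definition quot_carrier (X : finType) (op : X -> X -> X) : Type :=
  {A : {set X} | A \in cycle_blocks op}.

(* Main.v *)
Require Import Defs.
From mathcomp Require Import all_boot.

Set Implicit Arguments. Unset Strict Implicit.
Section Q.
Variables (X : finType) (op : X -> X -> X) (u d : X -> X).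
Hypothesis H : is_GLrack op u d.

Local Notation D := (diag op).
Local Notation blk := (cycle_block op).

Lemma Dinj : injective D.
Proof.
case: H => _ Hud _ _. apply: (can_inj (g := fun x => u (d x))) => x.
by case: (Hud x).
Qed.

Lemma opD x y : op x (D y) = op x y.
Proof.
case: H => _ Hud _ Hr.
have e : y = u (d (D y)) by case: (Hud y).
by rewrite [in RHS]e (proj1 (Hr _ _)) (proj2 (Hr _ _)).
Qed.

Lemma Dop x y : D (op x y) = op (D x) y.
Proof. case: H => [[_ Hsd] _ _ _]; by rewrite /diag [RHS]Hsd. Qed.

Lemma uD x : u (D x) = D (u x).
Proof. case: H => _ _ Hu Hr; by rewrite /diag (proj1 (Hu _ _)) (proj1 (Hr _ _)). Qed.

Lemma dD x : d (D x) = D (d x).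
Proof. case: H => _ _ Hu Hr; by rewrite /diag (proj2 (Hu _ _)) (proj2 (Hr _ _)). Qed.

Lemma iter_opl n x y : iter n D (op x y) = op (iter n D x) y.
Proof. elim: n => //= n IH; by rewrite IH Dop. Qed.

Lemma iter_opr n x y : op x (iter n D y) = op x y.
Proof. elim: n => //= n IH; by rewrite opD. Qed.

Lemma iter_u n x : u (iter n D x) = iter n D (u x).
Proof. elim: n => //= n IH; by rewrite uD IH. Qed.

Lemma iter_d n x : d (iter n D x) = iter n D (d x).
Proof. elim: n => //= n IH; by rewrite dD IH. Qed.

Lemma in_blk x y : (y \in blk x) <-> exists n, y = iter n D x.
Proof.
rewrite inE; split.
  by move=> h; exists (findex D x y); rewrite iter_findex.
by case=> n ->; apply: fconnect_iter.
Qed.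

Lemma blk_eq x y : y \in blk x -> blk y = blk x.
Proof.
rewrite inE => h; apply/setP => z; rewrite !inE.
apply/idP/idP => h2; first exact: connect_trans h h2.
by apply: connect_trans h2; rewrite fconnect_sym //; exact: Dinj.
Qed.

Lemma blk_self x : x \in blk x.
Proof. by rewrite inE connect0. Qed.

Lemma sob a b : set_op op (blk a) (blk b) = blk (op a b).
Proof.
apply/setP => z; apply/idP/idP.
  case/imset2P => x y /in_blk [n ->] /in_blk [m ->] ->.
  by rewrite iter_opr -iter_opl; apply/in_blk; exists n.
case/in_blk => n ->; rewrite iter_opl.
by apply/imset2P; exists (iter n D a) b => //; [apply/in_blk; exists n|apply: blk_self].
Qed.

Lemma uob a : u @: blk a = blk (u a).
Proof.
apply/setP => z; apply/idP/idP.
  case/imsetP => x /in_blk [n ->] ->; rewrite iter_u; apply/in_blk; by exists n.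
case/in_blk => n ->; rewrite -iter_u; apply: imset_f; apply/in_blk; by exists n.
Qed.

Lemma dob a : d @: blk a = blk (d a).
Proof.
apply/setP => z; apply/idP/idP.
  case/imsetP => x /in_blk [n ->] ->; rewrite iter_d; apply/in_blk; by exists n.
case/in_blk => n ->; rewrite -iter_d; apply: imset_f; apply/in_blk; by exists n.
Qed.

Lemma rep (A : quot_carrier op) : exists a, val A = blk a.
Proof. case: A => A /= /imsetP [a _ ->]; by exists a. Qed.

Lemma blk_in a : blk a \in cycle_blocks op.
Proof. exact: imset_f. Qed.

Lemma top_in (A B : quot_carrier op) : set_op op (val A) (val B) \in cycle_blocks op.
Proof. have [a ->] := rep A; have [b ->] := rep B; rewrite sob; exact: blk_in. Qed.

Lemma tu_in (A : quot_carrier op) : u @: val A \in cycle_blocks op.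
Proof. have [a ->] := rep A; rewrite uob; exact: blk_in. Qed.

Lemma td_in (A : quot_carrier op) : d @: val A \in cycle_blocks op.
Proof. have [a ->] := rep A; rewrite dob; exact: blk_in. Qed.

End Q.

Theorem theorem3p5 (X : finType) (op : X -> X -> X) (u d : X -> X) :
  is_block_GLrack op u d ->
  exists (top : quot_carrier op -> quot_carrier op -> quot_carrier op)
         (tu td : quot_carrier op -> quot_carrier op),
    [/\ (forall A B, val (top A B) = set_op op (val A) (val B)),
        (forall A, val (tu A) = u @: val A),
        (forall A, val (td A) = d @: val A)
      & is_GLquandle top tu td].
Proof.
case=> H _.
pose top := fun A B : quot_carrier op => @exist _ (fun S => S \in cycle_blocks op) _ (top_in H A B) : quot_carrier op.
pose tu := fun A : quot_carrier op => @exist _ (fun S => S \in cycle_blocks op) _ (tu_in H A) : quot_carrier op.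
pose td := fun A : quot_carrier op => @exist _ (fun S => S \in cycle_blocks op) _ (td_in H A) : quot_carrier op.
exists top, tu, td; split => //.
have H' := H; case: H' => [[Hbij Hsd]] Hud Hu Hr.
have Vt : forall A B, val (top A B) = set_op op (val A) (val B) by [].
have Vu : forall A, val (tu A) = u @: val A by [].
have Vd : forall A, val (td A) = d @: val A by [].
split; last first.
  move=> A; apply: val_inj; have [a ha] := rep A.
  rewrite Vt ha (sob H); apply: (blk_eq H); rewrite inE; exact: fconnect1.
split.
- split.
  + move=> A; apply: injF_bij => B C /(congr1 val); rewrite !Vt.
    have [a ->] := rep A; have [b hb] := rep B; have [c hc] := rep C.
    rewrite hb hc !(sob H) => e.
    have : op c a \in cycle_block op (op b a) by rewrite e blk_self.
    case/in_blk => n; rewrite (iter_opl H) => e2.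
    have [g gK _] := Hbij a.
    have e3 : c = iter n (diag op) b.
      by apply: (can_inj gK); exact: e2.
    apply: val_inj; rewrite hb hc; symmetry; apply: (blk_eq H); apply/in_blk; by exists n.
  + move=> A B C; apply: val_inj; rewrite !Vt.
    have [a ->] := rep A; have [b ->] := rep B; have [c ->] := rep C.
    by rewrite !(sob H) Hsd.
- move=> A; have [a ha] := rep A; split; apply: val_inj;
    rewrite !(Vt, Vu, Vd) ha !(sob H, uob H, dob H); case: (Hud a) => [e1 e2].
    by rewrite e1.
  by rewrite e2.
- move=> A B; have [a ha] := rep A; have [b hb] := rep B; split; apply: val_inj;
    rewrite !(Vt, Vu, Vd) ha hb !(sob H, uob H, dob H); case: (Hu a b) => [e1 e2].
    by rewrite e1.
  by rewrite e2.
- move=> A B; have [a ha] := rep A; have [b hb] := rep B; split; apply: val_inj;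
    rewrite !(Vt, Vu, Vd) ha hb !(sob H, uob H, dob H); case: (Hr a b) => [e1 e2].
    by rewrite e1.
  by rewrite e2.
Qed.
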